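(* Let $m,a,b,n$ be positive integers with $n\ge 3$ and $(3m+1)/2\le a<b\le (5m-1)/3$. Let $A\subset\mathbb N_+$ with $|A|=n-1$, $\min A=a$, $\max A=b$, such that the sums $x_1+\dots+x_h$, over all $h\in\{1,2,3\}$ and all multisets $\{x_1,\dots,x_h\}$ of elements of $A$, are pairwise distinct modulo $m$. Let $S=\langle\{m\}\cup A\rangle_{4m}$. Then $W(S)\ge 9$; in particular $S$ satisfies Wilf's conjecture.
   Context: $\mathbb N=\{0,1,2,\dots\}$, $\mathbb N_+=\mathbb N\setminus\{0\}$; $[x,y]=\{z\in\mathbb Z: x\le z\le y\}$. For a finite set $B$ of positive integers and a positive integer $t$, $\langle B\rangle_t=\big(\sum_{x\in B}\mathbb N x\big)\cup\{z\in\mathbb Z: z\ge t\}$; this is a numerical semigroup. A numerical semigroup is a submonoid $S\subseteq\mathbb N$ with $\mathbb N\setminus S$ finite; its conductor is $c=1+\max(\mathbb Z\setminus S)$. Let $S^*=S\setminus\{0\}$, $D=S^*+S^*$, $P=S^*\setminus D$ (primitive elements), $L=S\cap[0,c-1]$, and $W(S)=|P|\,|L|-c$. Wilf's conjecture for $S$ is the inequality $W(S)\ge 0$. *)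

(* Defs.v *)
From HB Require Import structures.
From mathcomp Require Import all_boot all_order all_algebra.
Set Implicit Arguments. Unset Strict Implicit. Unset Printing Implicit Defensive.

Fixpoint in_span (B : seq nat) (z : nat) : bool :=
  match B with
  | [::] => z == 0
  | x :: B' => [exists k : 'I_z.+1, (k * x <= z) && in_span B' (z - k * x)]
  end.

Definition gen_sg (B : seq nat) (t : nat) (z : nat) : bool :=
  in_span B z || (t <= z).

(* Conductor c = 1 + max (Z \ S) of S = <B>_t (0 if S = N).
   Every z >= t lies in S, so gaps are < t. *)
Definition conductor (B : seq nat) (t : nat) : nat :=
  \max_(z < t | ~~ gen_sg B t z) z.+1.

Definition primitive (S : nat -> bool) (z : nat) : bool :=
  [&& S z, 0 < z &
      ~~ [exists x : 'I_z, [&& 0 < (x : nat), S x & S (z - x)]]].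

(* |P| : every primitive element of <B>_t is < 2t+2
   (if z >= 2t+2 >= 2 then z = t' + (z - t') with t' = max t 1). *)
Definition nprim (B : seq nat) (t : nat) : nat :=
  count (primitive (gen_sg B t)) (iota 0 (2 * t + 2)).

Definition nleft (B : seq nat) (t : nat) : nat :=
  count (gen_sg B t) (iota 0 (conductor B t)).

Definition wilf (B : seq nat) (t : nat) : int :=
  ((nprim B t * nleft B t)%:Z - (conductor B t)%:Z)%R.

(* Main.v *)
Require Import Defs.
From HB Require Import structures.
From mathcomp Require Import all_boot all_order all_algebra.
From mathcomp Require Import zify.

Lemma sumn_count_filter (x : nat) (X : seq nat) :
  sumn X = count_mem x X * x + sumn (filter (predC1 x) X).
Proof.
elim: X => [|y X IH] //=.
case: (eqVneq y x) => [->|ne] /=.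
- by rewrite IH mulnDl mul1n addnA.
- by rewrite IH add0n addnCA.
Qed.

Lemma in_span_sum (B : seq nat) z :
  in_span B z -> exists X, all (fun y => y \in B) X /\ sumn X = z.
Proof.
elim: B z => [|x B IH] z /=.
- by move/eqP->; exists [::].
- case/existsP=> k /andP[hk /IH [X [hX hs]]].
  exists (nseq k x ++ X); split.
  + rewrite all_cat; apply/andP; split.
    * by apply/allP=> y /nseqP[-> _]; exact: mem_head.
    * by apply/allP=> y /(allP hX) hy; rewrite inE hy orbT.
  + rewrite sumn_cat sumn_nseq hs. lia.
Qed.

Lemma sum_in_span (B : seq nat) X :
  all (fun y => 0 < y) B -> all (fun y => y \in B) X -> in_span B (sumn X).
Proof.
elim: B X => [|x B IH] X /=.
- by case: X => [|y X] //= _ /andP[].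
- move=> /andP[x0 hB] hX. apply/existsP.
  have hk : count_mem x X < (sumn X).+1.
    rewrite ltnS (sumn_count_filter x X).
    have := leq_pmulr (count_mem x X) x0. lia.
  exists (Ordinal hk) => /=.
  have e := sumn_count_filter x X.
  have -> : sumn X - count_mem x X * x = sumn (filter (predC1 x) X) by rewrite e addKn.
  apply/andP; split; first by rewrite e leq_addr.
  apply: IH hB _. apply/allP => y; rewrite mem_filter => /andP[/= hy /(allP hX)].
  by rewrite inE (negbTE hy).
Qed.

Lemma sumn_bounds (a b : nat) X : all (fun x => a <= x <= b) X ->
  size X * a <= sumn X <= size X * b.
Proof.
elim: X => [|x X IH] //= /andP[/andP[h1 h2] /IH]. lia.
Qed.

Lemma uniq_count_ge (p : pred nat) N s :
  uniq s -> all (fun z => (z < N) && p z) s -> size s <= count p (iota 0 N).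
Proof.
move=> us hs. rewrite -size_filter. apply: uniq_leq_size => // z hz.
have /andP[h1 h2] := allP hs z hz. by rewrite mem_filter h2 mem_iota.
Qed.

Lemma uniq_count_mem (s t : seq nat) : uniq s -> count (fun z => z \in t) s <= size t.
Proof.
move=> us. rewrite -size_filter. apply: leq_trans (size_undup t).
apply: uniq_leq_size; first exact: filter_uniq.
by move=> z; rewrite mem_filter mem_undup => /andP[].
Qed.

Lemma uniq_interval (s : seq nat) lo hi : uniq s -> all (fun z => lo <= z <= hi) s ->
  size s <= hi - lo + 1.
Proof.
move=> us hs. have -> : hi - lo + 1 = size (iota lo (hi - lo + 1)) by rewrite size_iota.
apply: uniq_leq_size => // z hz. have := allP hs z hz. rewrite mem_iota. lia.
Qed.

Lemma mod_shift (m k u : nat) : k * m <= u < k * m + m -> u %% m = u - k * m.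
Proof.
move=> h. have -> : u = k * m + (u - k * m) by lia.
rewrite modnMDl modn_small; lia.
Qed.

Lemma uniq_cat_lt (s1 s2 : seq nat) c : uniq s1 -> uniq s2 ->
  all (fun z => z < c) s1 -> all (fun z => c <= z) s2 -> uniq (s1 ++ s2).
Proof.
move=> u1 u2 h1 h2; rewrite cat_uniq u1 u2 andbT /=.
apply/hasPn => z /(allP h2) hz; apply/negP => /(allP h1); lia.
Qed.

Lemma uniq_cons_lt (x : nat) s : all (fun z => x < z) s -> uniq s -> uniq (x :: s).
Proof.
move=> h u /=; rewrite u andbT; apply/negP => /(allP h); lia.
Qed.

Lemma count_sub_in (T : eqType) (p q : pred T) (s : seq T) :
  (forall z, z \in s -> p z -> q z) -> count p s <= count q s.
Proof.
elim: s => [|x s IH] //= h.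
apply: leq_add; last by apply: IH => z hz; apply: h; rewrite inE hz orbT.
case hp: (p x) => //=; by rewrite (h x (mem_head _ _) hp).
Qed.

Ltac solve_all := rewrite /= ?all_cat /= ?all_cat /= ?all_cat /=;
  repeat (apply/andP; split); try lia; apply/allP => z hz /=;
  first [ have := rgA z hz | have := bmA z hz | have := b2mA z hz
        | have := bV2 z hz ]; lia.

Lemma L_uniq (m a b : nat) (A V2 : seq nat) :
  0 < m -> 11 <= m -> 3 * m + 1 <= 2 * a -> a < b -> 3 * b <= 5 * m - 1 ->
  uniq A -> uniq V2 ->
  (forall x, x \in A -> a <= x <= b) -> (forall v, v \in V2 -> 2 * a <= v <= 2 * b) ->
  uniq (0 :: m :: A ++ 2 * m :: map (addn m) A ++ 3 * m :: V2 ++ map (addn (2 * m)) A).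
Proof.
move=> m0 m11 ha hab hb uA uV rgA bV2.
have bmA : forall v, v \in map (addn m) A -> m + a <= v <= m + b.
  by move=> v /mapP [x /rgA hx ->]; lia.
have b2mA : forall v, v \in map (addn (2 * m)) A -> 2 * m + a <= v <= 2 * m + b.
  by move=> v /mapP [x /rgA hx ->]; lia.
apply: uniq_cons_lt; first solve_all.
apply: uniq_cons_lt; first solve_all.
apply: (@uniq_cat_lt _ _ (2 * m)) => //; try solve_all.
apply: uniq_cons_lt; first solve_all.
apply: (@uniq_cat_lt _ _ (3 * m)); try solve_all.
  by rewrite map_inj_uniq //; exact: addnI.
apply: uniq_cons_lt; first solve_all.
apply: (@uniq_cat_lt _ _ (2 * b + 1)); try solve_all.
by rewrite map_inj_uniq //; exact: addnI.
Qed.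

Lemma arith (k r2 r3 m p : nat) : 2 <= k -> r2 <= k*k -> r2 + (k-1) <= r3 ->
  2 * k + 2 * r3 + 1 <= m -> p = m - r2 - r3 -> 4 * m + 9 <= p * (4 + 3*k + r2).
Proof.
move=> hk h2 h3 hm ->.
set e := r3 - (r2 + (k - 1)). set f := m - (2 * k + 2 * r3 + 1).
have -> : m = 2 * k + 2 * r3 + 1 + f by lia.
have -> : r3 = r2 + (k - 1) + e by lia.
have -> : 2 * k + 2 * (r2 + (k - 1) + e) + 1 + f - r2 - (r2 + (k - 1) + e) = 3*k + e + f by lia.
nia.
Qed.

Theorem proposition4p1 (m a b n : nat) (A : seq nat) :
  0 < m -> 0 < a -> 0 < b -> 0 < n -> 3 <= n ->
  3 * m + 1 <= 2 * a -> a < b -> 3 * b <= 5 * m - 1 ->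
  uniq A -> size A = n - 1 -> all (fun x => 0 < x) A ->
  a \in A -> b \in A -> all (fun x => a <= x <= b) A ->
  (forall X Y : seq nat,
     all (fun x => x \in A) X -> all (fun x => x \in A) Y ->
     1 <= size X <= 3 -> 1 <= size Y <= 3 ->
     ~~ perm_eq X Y -> sumn X != sumn Y %[mod m]) ->
  (9 <= wilf (m :: A) (4 * m))%R.
Proof.
move=> m0 a0 b0 n0 n3 ha hab hb uA sA posA aA bA rA hyp.
have m11 : 11 <= m by lia.
have rgA : forall x, x \in A -> a <= x <= b by move=> x /(allP rA).
set S := gen_sg (m :: A) (4 * m).
have repr : forall z, S z -> z < 4 * m ->
    exists j X, all (fun y => y \in A) X /\ z = j * m + sumn X.
  move=> z; rewrite /S /gen_sg => /orP[|]; last lia.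
  move=> /= /existsP [j /andP[hj /in_span_sum [X [hX hs]]]] _.
  exists j, X; split => //; lia.
have memS : forall j X z, all (fun y => y \in A) X -> z = j * m + sumn X -> S z.
  move=> j X z hX ->; rewrite /S /gen_sg; apply/orP; left.
  have -> : j * m + sumn X = sumn (nseq j m ++ X) by rewrite sumn_cat sumn_nseq mulnC.
  apply: sum_in_span; first by rewrite /= m0 posA.
  rewrite all_cat; apply/andP; split.
  - by apply/allP => y /nseqP [-> _]; exact: mem_head.
  - by apply/allP => y /(allP hX) hy; rewrite inE hy orbT.
have bnd : forall X, all (fun y => y \in A) X -> size X * a <= sumn X <= size X * b.
  by move=> X hX; apply: sumn_bounds; apply/allP => y /(allP hX) /rgA.
have Sge : forall x, S x -> 0 < x -> m <= x.
  move=> x hx x0. case: (ltnP x (4 * m)) => [hlt|]; last lia.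
  have [j [X [hX e]]] := repr x hx hlt.
  have := bnd X hX.
  case: j e => [|j] e.
  - case: (size X) => [|s]; first lia.
    move=> h. have : a <= s.+1 * a by rewrite leq_pmull.
    lia.
  - have : m <= j.+1 * m by rewrite leq_pmull.
    lia.
have notS : ~~ S (4 * m - 1).
  apply/negP => hS. have [j [X [hX e]]] := repr _ hS (ltac:(lia)).
  have hbX := bnd X hX.
  have hj : j < 4 by rewrite -(ltn_pmul2r m0); lia.
  have hX3 : size X < 3.
    rewrite ltnNge; apply/negP => h3.
    have : 3 * a <= size X * a by rewrite leq_mul2r h3 orbT.
    lia.
  move: e hbX.
  case: (size X) hX3 => [|[|[|s]]] // _; case: j hj => [|[|[|[|j]]]] // _; clear -m0 m11 ha hab hb; lia.
have cond : conductor (m :: A) (4 * m) = 4 * m.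
  rewrite /conductor. apply/eqP; rewrite eqn_leq; apply/andP; split.
  - by apply/bigmax_leqP => i _; exact: ltn_ord.
  - have h : 4 * m - 1 < 4 * m by lia.
    have := @leq_bigmax_cond _ (fun i : 'I_(4 * m) => ~~ gen_sg (m :: A) (4 * m) i)
      (fun i => i.+1) (Ordinal h) notS.
    rewrite /=; lia.
set k := n - 1.
set S2 := [seq x + y | x <- A, y <- A].
set V2 := undup S2.
set S3 := [seq x + y | x <- A, y <- S2].
set V3 := undup S3.
set mA := map (addn m) A.
set m2A := map (addn (2 * m)) A.
have inS2 : forall v, v \in S2 -> exists x y, [/\ x \in A, y \in A & v = x + y].
  by move=> v /allpairsP [[x y] /= [hx hy ->]]; exists x, y.
have inS3 : forall v, v \in S3 -> exists x y z, [/\ x \in A, y \in A, z \in A & v = x + (y + z)].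
  move=> v /allpairsP [[x w] /= [hx /inS2 [y [z [hy hz ->]]] ->]]; by exists x, y, z.
have bV2 : forall v, v \in V2 -> 2 * a <= v <= 2 * b.
  move=> v; rewrite mem_undup => /inS2 [x [y [/rgA hx /rgA hy ->]]]; lia.
have bS2 : forall v, v \in S2 -> 2 * a <= v <= 2 * b.
  by move=> v hv; apply: bV2; rewrite mem_undup.
have bV3 : forall v, v \in V3 -> 3 * a <= v <= 3 * b.
  move=> v; rewrite mem_undup => /inS3 [x [y [z [/rgA hx /rgA hy /rgA hz ->]]]]; lia.
have bmA : forall v, v \in mA -> m + a <= v <= m + b.
  by move=> v /mapP [x /rgA hx ->]; lia.
have b2mA : forall v, v \in m2A -> 2 * m + a <= v <= 2 * m + b.
  by move=> v /mapP [x /rgA hx ->]; lia.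
have sA' : size A = k by [].
have r2le : size V2 <= k * k.
  by apply: leq_trans (size_undup _) _; rewrite size_allpairs sA'.
have Lbnd : 4 + 3 * k + size V2 <= nleft (m :: A) (4 * m).
  rewrite /nleft cond.
  set Lst := 0 :: m :: A ++ 2 * m :: mA ++ 3 * m :: V2 ++ m2A.
  have -> : 4 + 3 * k + size V2 = size Lst.
    rewrite /Lst /= ?size_cat /= ?size_cat /= ?size_cat /= /mA /m2A !size_map sA'; lia.
  apply: uniq_count_ge.
  - apply: (@L_uniq m a b) => //. exact: undup_uniq.
  - rewrite /Lst /= ?all_cat /= ?all_cat /= ?all_cat /=.
    repeat (apply/andP; split); try lia.
    + by apply: (memS 0 [::]).
    + by apply: (memS 1 [::]); rewrite //= mul1n addn0.
    + apply/allP => z hz /=; have := rgA z hz; move=> h; apply/andP; split; first lia.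
      by apply: (memS 0 [::z]); rewrite /= ?hz ?addn0.
    + by apply: (memS 2 [::]); rewrite //= addn0.
    + apply/allP => z /mapP [x hx ->] /=; have := rgA x hx; move=> h; apply/andP; split; first lia.
      by apply: (memS 1 [::x]); rewrite /= ?hx ?mul1n ?addn0.
    + by apply: (memS 3 [::]); rewrite //= addn0.
    + apply/allP => z hz /=; have := bV2 z hz; move=> h; apply/andP; split; first lia.
      move: hz; rewrite mem_undup => /inS2 [x [y [hx hy ->]]].
      by apply: (memS 0 [::x; y]); rewrite /= ?hx ?hy ?addn0.
    + apply/allP => z /mapP [x hx ->] /=; have := rgA x hx; move=> h; apply/andP; split; first lia.
      by apply: (memS 2 [::x]); rewrite /= ?hx ?addn0.
set H := 0 :: [seq x %% m | x <- A ++ V2 ++ V3].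
have primz : forall z, 4 * m <= z < 5 * m -> z %% m \notin H -> primitive S z.
  move=> z hz hH. rewrite /primitive. apply/and3P; split.
  - by rewrite /S /gen_sg; apply/orP; right; clear -hz; lia.
  - clear -hz m0; lia.
  - apply/negP => /existsP [x /and3P [x0 Sx Szx]].
    have hxz := ltn_ord x.
    have hx := Sge _ Sx x0.
    have hzx := Sge _ Szx (ltac:(clear -hxz; lia)).
    have [j1 [X1 [hX1 e1]]] := repr _ Sx (ltac:(clear -hz hxz hzx; lia)).
    have [j2 [X2 [hX2 e2]]] := repr _ Szx (ltac:(clear -hz hxz hx; lia)).
    have hX : all (fun y => y \in A) (X1 ++ X2) by rewrite all_cat hX1 hX2.
    have ez : z = (j1 + j2) * m + sumn (X1 ++ X2) by rewrite sumn_cat mulnDl; clear -e1 e2 hxz; lia.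
    move: hH; rewrite ez modnMDl.
    have hbX := bnd _ hX.
    have hs : size (X1 ++ X2) < 4.
      rewrite ltnNge; apply/negP => h4.
      have : 4 * a <= size (X1 ++ X2) * a by rewrite leq_mul2r h4 orbT.
      clear -hbX ha hz ez; lia.
    move: hX hs. case: (X1 ++ X2) => [|y1 [|y2 [|y3 [|y4 X]]]] //=.
    + by rewrite mod0n inE eqxx.
    + move=> /andP[h1 _] _ /negP; apply; rewrite inE; apply/orP; right; apply/mapP.
      by exists y1; [rewrite mem_cat h1 | rewrite addn0].
    + move=> /and3P[h1 h2 _] _ /negP; apply; rewrite inE; apply/orP; right; apply/mapP.
      exists (y1 + y2); last by rewrite addn0.
      rewrite mem_cat mem_cat mem_undup allpairs_f //.
      by rewrite orbT.
    + move=> /and4P[h1 h2 h3 _] _ /negP; apply; rewrite inE; apply/orP; right; apply/mapP.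
      exists (y1 + (y2 + y3)); last by rewrite addn0.
      by rewrite mem_cat mem_cat (mem_undup S3) allpairs_f ?orbT // allpairs_f.
have primA : forall y, y \in m :: A -> primitive S y.
  move=> y hy.
  have hyb : m <= y < 2 * m.
    move: hy; rewrite inE => /orP [/eqP ->|/rgA h]; [clear -m0; lia | clear -h ha hb m11; lia].
  rewrite /primitive; apply/and3P; split.
  - move: hy; rewrite inE => /orP [/eqP ->|hy].
    + by apply: (memS 1 [::]); rewrite /= ?mul1n ?addn0.
    + by apply: (memS 0 [::y]); rewrite /= ?hy ?addn0.
  - clear -hyb; lia.
  - apply/negP => /existsP [x /and3P [x0 Sx Szx]].
    have hxz := ltn_ord x.
    have hx := Sge _ Sx x0.
    have hzx := Sge _ Szx (ltac:(clear -hxz; lia)).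
    clear -hx hzx hxz hyb; lia.
have Pbnd : n + (m - size H) <= nprim (m :: A) (4 * m).
  rewrite /nprim.
  have -> : 2 * (4 * m) + 2 = 4 * m + (m + (3 * m + 2)) by clear; lia.
  rewrite iotaD iotaD count_cat count_cat add0n.
  apply: leq_add.
  - have -> : n = size (m :: A) by rewrite /= sA; clear -n0; lia.
    apply: uniq_count_ge.
    + apply: uniq_cons_lt => //. apply/allP => z /rgA h; clear -h ha; lia.
    + apply/allP => y hy. rewrite primA // andbT.
      move: hy; rewrite inE => /orP [/eqP ->|/rgA h]; [clear -m0; lia | clear -h ha hb m11; lia].
  - apply: leq_trans (leq_addr _ _).
    set s := iota (4 * m) m.
    have e1 := count_predC (fun z => z %% m \notin H) s.
    have h1 : count (fun z => z %% m \notin H) s <= count (primitive S) s.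
      apply: count_sub_in => z; rewrite mem_iota => hz hQ; apply: primz => //; clear -hz; lia.
    have h2 : count (predC (fun z => z %% m \notin H)) s <= size H.
      have -> : count (predC (fun z => z %% m \notin H)) s = count (fun r => r \in H) (map (modn^~ m) s).
        by rewrite count_map; apply: eq_count => z /=; rewrite negbK.
      apply: uniq_count_mem. rewrite map_inj_in_uniq ?iota_uniq //.
      move=> u v; rewrite !mem_iota => hu hv e.
      have eu : u %% m = u - 4 * m by apply: mod_shift; clear -hu; lia.
      have ev : v %% m = v - 4 * m by apply: mod_shift; clear -hv; lia.
      clear -eu ev e hu hv; lia.
    rewrite size_iota in e1. rewrite /S in h1; clear -e1 h1 h2; lia.
have rep13 : forall u, u \in A ++ V3 ->
    exists X, [/\ all (fun y => y \in A) X, 1 <= size X <= 3 & sumn X = u].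
  move=> u; rewrite mem_cat => /orP [hu|].
  - by exists [:: u]; rewrite /= hu addn0.
  - rewrite mem_undup => /inS3 [x [y [z [hx hy hz ->]]]].
    by exists [:: x; y; z]; rewrite /= hx hy hz addn0.
have iv : k + size V3 <= (3 * b - 4 * m) - (a - m) + 1.
  have -> : k + size V3 = size (map (modn^~ m) (A ++ V3)) by rewrite size_map size_cat sA'.
  apply: uniq_interval.
  - rewrite map_inj_in_uniq.
    + apply: (@uniq_cat_lt _ _ (b + 1)) => //.
      * exact: undup_uniq.
      * by apply/allP => z /rgA h; clear -h; lia.
      * by apply/allP => z /bV3 h; change nat in z; clear -h ha hab hb m11; lia.
    + move=> u v hu hv e. case: (eqVneq u v) => // ne. exfalso.
      have [X [hX sX eX]] := rep13 u hu. have [Y [hY sY eY]] := rep13 v hv.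
      have np : ~~ perm_eq X Y.
        by apply/negP => /perm_sumn; rewrite eX eY; apply/eqP.
      by move: (hyp X Y hX hY sX sY np); rewrite eX eY e eqxx.
  - apply/allP => r /mapP [u hu ->]; move: hu; rewrite mem_cat => /orP [/rgA h| /bV3 h].
    + have -> : u %% m = u - 1 * m by apply: mod_shift; clear -h ha hb m11; lia.
      clear -h ha hb m11; lia.
    + have -> : u %% m = u - 4 * m by apply: mod_shift; clear -h ha hb m11; lia.
      clear -h ha hb m11; lia.
have v5 : size V2 + (k - 1) <= size V3.
  have -> : size V2 + (k - 1) = size (map (addn a) V2 ++ map (addn (2 * b)) (rem a A)).
    rewrite size_cat !size_map size_rem // sA' subn1. done.
  apply: uniq_leq_size.
  - apply: (@uniq_cat_lt _ _ (a + 2 * b + 1)).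
    + rewrite map_inj_uniq; [exact: undup_uniq | exact: addnI].
    + rewrite map_inj_uniq; [exact: rem_uniq | exact: addnI].
    + by apply/allP => z /mapP [v /bV2 h ->]; clear -h; lia.
    + apply/allP => z /mapP [x hx ->]. move: hx; rewrite (mem_rem_uniq _ uA) inE.
      move=> /andP [/eqP hxa /rgA h]. clear -h hxa; lia.
  - move=> z; rewrite mem_cat => /orP [] /mapP [w hw ->]; rewrite mem_undup.
    + by move: hw; rewrite mem_undup => hw; apply: allpairs_f.
    + have -> : 2 * b + w = w + (b + b) by clear; lia.
      apply: allpairs_f; first exact: (mem_rem hw).
      exact: allpairs_f.
rewrite /wilf cond.
have sH : size H = 1 + (k + (size V2 + size V3)) by rewrite /= size_map !size_cat sA'.
have hPL : (m - size V2 - size V3) * (4 + 3 * k + size V2) <= nprim (m :: A) (4 * m) * nleft (m :: A) (4 * m).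
  apply: leq_mul => //. rewrite sH /k in Pbnd. clear -Pbnd n0; lia.
have := @arith k (size V2) (size V3) m (m - size V2 - size V3) (ltac:(rewrite /k; clear -n3; lia)) r2le v5
  (ltac:(clear -iv ha hb hab m11; lia)) erefl.
move: hPL.
move: (nprim _ _) (nleft _ _) => P L h1 h2.
clear -h1 h2; lia.
Qed.
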